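(* Let $k\ge 1$ and let $G$ be a finite abelian group with prime-power decomposition $G\cong\bigoplus_i (\mathbb{Z}_{p_i^{r_i}})^{d_i}$, where the pairs $(p_i,r_i)$ are pairwise distinct, $p_i$ prime, $r_i\ge 1$, $d_i\ge 1$. Suppose at least one of the following holds: (1) for every $i$ with $p_i=2$ or $p_i=3$ one has $d_i\ge 2$ (no condition for $p_i>3$; $k$ arbitrary); (2) no $p_i$ equals $2$, and $k$ is even; (3) for every $i$ with $p_i=2$ one has $d_i\ge 2$, and $k=4s$ for some positive integer $s$. Then the restricted wreath product $G\wr\mathbb{Z}^k$ admits an automorphism $\varphi$ with $R(\varphi)<\infty$; i.e. $G\wr\mathbb{Z}^k$ does not have the $R_\infty$ property.
   Context: For a group $\Gamma$ and an endomorphism $\varphi$, elements $x,y\in\Gamma$ are $\varphi$-conjugate (twisted conjugate) if $y=gx\varphi(g^{-1})$ for some $g\in\Gamma$; the equivalence classes are Reidemeister classes and their number $R(\varphi)\in\{1,2,\dots\}\cup\{\infty\}$ is the Reidemeister number. A group has the $R_\infty$ property if every automorphism has $R(\varphi)=\infty$. The restricted wreath product is $G\wr\mathbb{Z}^k=\Sigma\rtimes_\alpha\mathbb{Z}^k$, where $\Sigma=\bigoplus_{x\in\mathbb{Z}^k}G_x$ with each $G_x$ a copy of $G$ (for $g\in G$, $g_x$ denotes $g$ in $G_x$), and $\alpha(x)(g_y)=g_{x+y}$. *)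

(* Defs.v *)
From HB Require Import structures.
From mathcomp Require Import all_boot all_order all_algebra.
Set Implicit Arguments. Unset Strict Implicit. Unset Printing Implicit Defensive.
Import Order.TTheory GRing.Theory Num.Theory.
Local Open Scope ring_scope.

Section Wreath.
Variables (G : zmodType) (k : nat).

Local Notation Zk := 'rV[int]_k.

Definition finsupp (f : Zk -> G) : Prop :=
  exists s : seq Zk, forall x, f x != 0 -> x \in s.

(* alpha(x) : (alpha(x) f)(z) = f (z - x), i.e. alpha(x)(g_y) = g_(x+y) *)
Definition wshift (x : Zk) (f : Zk -> G) : Zk -> G := fun z => f (z - x).

Lemma finsupp_shift x f : finsupp f -> finsupp (wshift x f).
Proof.
move=> [s hs]; exists [seq y + x | y <- s] => z /hs hz.
by apply/mapP; exists (z - x) => //; rewrite subrK.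
Qed.

Lemma finsupp_add f g : finsupp f -> finsupp g -> finsupp (fun z => f z + g z).
Proof.
move=> [s hs] [t ht]; exists (s ++ t) => z hz; rewrite mem_cat.
case: (eqVneq (f z) 0) => [fz0|/hs -> //].
by apply/orP; right; apply: ht; move: hz; rewrite fz0 add0r.
Qed.

Lemma finsupp_opp f : finsupp f -> finsupp (fun z => - f z).
Proof. by move=> [s hs]; exists s => z; rewrite oppr_eq0; apply: hs. Qed.

Lemma finsupp0 : finsupp (fun _ => 0).
Proof. by exists [::] => z; rewrite eqxx. Qed.

Record wr := Wr { wr_fun : Zk -> G; wr_pos : Zk; wr_fin : finsupp wr_fun }.

Definition wr_mul (a b : wr) : wr :=
  @Wr (fun z => wr_fun a z + wshift (wr_pos a) (wr_fun b) z)
      (wr_pos a + wr_pos b)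
      (finsupp_add (wr_fin a) (finsupp_shift (wr_pos a) (wr_fin b))).

Definition wr_inv (a : wr) : wr :=
  @Wr (fun z => - wshift (- wr_pos a) (wr_fun a) z) (- wr_pos a)
      (finsupp_opp (finsupp_shift (- wr_pos a) (wr_fin a))).

Definition wr_one : wr := @Wr (fun _ => 0) 0 finsupp0.

Definition wr_automorphism (phi : wr -> wr) : Prop :=
  (forall a b, phi (wr_mul a b) = wr_mul (phi a) (phi b)) /\ bijective phi.

Definition twisted_conj (phi : wr -> wr) (a b : wr) : Prop :=
  exists g : wr, b = wr_mul (wr_mul g a) (phi (wr_inv g)).

Definition reidemeister_finite (phi : wr -> wr) : Prop :=
  exists (n : nat) (r : 'I_n -> wr), forall a, exists i, twisted_conj phi a (r i).

End Wreath.

(* A decomposition datum is a list of triples ((p_i, r_i), d_i). *)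
Definition decomp_moduli (L : seq (nat * nat * nat)) : seq nat :=
  flatten [seq nseq t.2 (t.1.1 ^ t.1.2)%N | t <- L].

(* G is isomorphic to (+)_t Z_{m_t} (m = decomp_moduli L): there are elements
   e_t generating G whose only relations are m_t * e_t = 0, i.e. the map
   Z^n -> G, c |-> sum_t c_t e_t is onto with kernel (+)_t m_t Z. *)
Definition decomp_iso (G : zmodType) (L : seq (nat * nat * nat)) : Prop :=
  let ms := decomp_moduli L in
  exists e : 'I_(size ms) -> G,
    (forall c : 'I_(size ms) -> int,
       \sum_(t < size ms) e t *~ c t = 0 <->
       forall t : 'I_(size ms), ((nth 0%N ms t)%:Z %| c t)%Z)
    /\ (forall g : G, exists c : 'I_(size ms) -> int, g = \sum_(t < size ms) e t *~ c t).

(* Main.v *)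
Require Import Defs.
From HB Require Import structures.
From mathcomp Require Import all_boot all_order all_algebra.
From mathcomp Require Import zify ring.
From Stdlib Require Import ProofIrrelevance FunctionalExtensionality ClassicalEpsilon.
Set Implicit Arguments. Unset Strict Implicit. Unset Printing Implicit Defensive.
Import Order.TTheory GRing.Theory Num.Theory.
Local Open Scope ring_scope.

Section WG.
Variables (G : finZmodType) (k n : nat).
Local Notation Zk := 'rV[int]_k.
Variable M : Zk -> Zk.
Variable A : G -> G.
Hypothesis n_gt0 : (0 < n)%N.
Hypothesis MD : forall x y, M (x + y) = M x + M y.
Hypothesis Msum : forall x, \sum_(j < n) iter j M x = 0.
Hypothesis AD : forall g h, A (g + h) = A g + A h.
Hypothesis Ainj : injective A.
Hypothesis Bin : injective (fun g => g - iter n A g).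

Lemma wr_ext (a b : wr G k) : wr_fun a = wr_fun b -> wr_pos a = wr_pos b -> a = b.
Proof.
case: a => fa xa ha; case: b => fb xb hb /= E1 E2; subst.
by rewrite (proof_irrelevance _ ha hb).
Qed.

Lemma M0 : M 0 = 0.
Proof. by apply: (addrI (M 0)); rewrite -MD !addr0. Qed.
Lemma MN x : M (- x) = - M x.
Proof. by apply/eqP; rewrite -addr_eq0 -MD addNr M0. Qed.
Lemma MB x y : M (x - y) = M x - M y.
Proof. by rewrite MD MN. Qed.
Lemma iterMD j x y : iter j M (x + y) = iter j M x + iter j M y.
Proof. by elim: j => //= j ->; rewrite MD. Qed.
Lemma iterMB j x y : iter j M (x - y) = iter j M x - iter j M y.
Proof. elim: j => //= j ->; by rewrite MB. Qed.
Lemma Msumr (I : Type) (r : seq I) (P : pred I) (F : I -> Zk) :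
  M (\sum_(i <- r | P i) F i) = \sum_(i <- r | P i) M (F i).
Proof. exact: (big_morph M MD M0). Qed.

Lemma A0 : A 0 = 0.
Proof. by apply: (addrI (A 0)); rewrite -AD !addr0. Qed.
Lemma AN g : A (- g) = - A g.
Proof. by apply/eqP; rewrite -addr_eq0 -AD addNr A0. Qed.
Lemma iterAD j g h : iter j A (g + h) = iter j A g + iter j A h.
Proof. by elim: j => //= j ->; rewrite AD. Qed.
Lemma iterA0 j : iter j A 0 = 0.
Proof. by elim: j => //= j ->; rewrite A0. Qed.
Lemma Asumr (I : Type) (r : seq I) (P : pred I) (F : I -> G) :
  A (\sum_(i <- r | P i) F i) = \sum_(i <- r | P i) A (F i).
Proof. exact: (big_morph A AD A0). Qed.

Lemma Mn x : iter n M x = x.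
Proof.
have h1 := Msum x.
have : M (\sum_(j < n) iter j M x) = 0 by rewrite h1 M0.
rewrite Msumr.
have -> : \sum_(j < n) M (iter j M x) = \sum_(j < n.+1) iter j M x - x.
  by rewrite big_ord_recl /= addrC addKr.
by rewrite big_ord_recr /= h1 add0r => /eqP; rewrite subr_eq0 => /eqP.
Qed.

Definition Mi := iter n.-1 M.
Lemma MK x : Mi (M x) = x.
Proof. by rewrite /Mi -iterSr prednK // Mn. Qed.
Lemma MiK x : M (Mi x) = x.
Proof. by rewrite /Mi -iterS prednK // Mn. Qed.
Lemma MiB x y : Mi (x - y) = Mi x - Mi y.
Proof. exact: iterMB. Qed.

Definition Ai := invF Ainj.
Lemma AK g : Ai (A g) = g.
Proof. exact: invF_f. Qed.
Lemma AiK g : A (Ai g) = g.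
Proof. exact: f_invF. Qed.
Lemma Ai0 : Ai 0 = 0.
Proof. by rewrite -{1}A0 AK. Qed.

Definition Bi := invF Bin.
Lemma BiK g : Bi g - iter n A (Bi g) = g.
Proof. exact: (f_invF Bin). Qed.
Lemma Bi0 : Bi 0 = 0.
Proof. by apply: Bin; rewrite /= BiK iterA0 subr0. Qed.

Lemma finsupp_phi (f : Zk -> G) : finsupp f -> finsupp (fun z => A (f (Mi z))).
Proof.
move=> [s hs]; exists [seq M y | y <- s] => z hz.
apply/mapP; exists (Mi z); last by rewrite MiK.
by apply: hs; apply: contraNneq hz => ->; rewrite A0.
Qed.

Definition phi (a : wr G k) : wr G k :=
  @Wr G k (fun z => A (wr_fun a (Mi z))) (M (wr_pos a)) (finsupp_phi (wr_fin a)).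

Lemma finsupp_psi (f : Zk -> G) : finsupp f -> finsupp (fun z => Ai (f (M z))).
Proof.
move=> [s hs]; exists [seq Mi y | y <- s] => z hz.
apply/mapP; exists (M z); last by rewrite MK.
by apply: hs; apply: contraNneq hz => ->; rewrite Ai0.
Qed.

Definition psi (a : wr G k) : wr G k :=
  @Wr G k (fun z => Ai (wr_fun a (M z))) (Mi (wr_pos a)) (finsupp_psi (wr_fin a)).

Lemma phi_auto : wr_automorphism phi.
Proof.
split.
  move=> a b; apply: wr_ext => /=; last by rewrite MD.
  apply: functional_extensionality => z /=.
  by rewrite /wshift AD MiB MK.
exists psi.
  move=> a; apply: wr_ext => /=; last by rewrite MK.
  by apply: functional_extensionality => z; rewrite AK MK.
move=> a; apply: wr_ext => /=; last by rewrite MiK.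
by apply: functional_extensionality => z; rewrite AiK MiK.
Qed.


Lemma mxMnE (z : Zk) m i : (z *+ m) 0 i = z 0 i *+ m.
Proof. by elim: m => [|m IH]; rewrite ?mulr0n ?mxE // !mulrS mxE IH. Qed.

Definition Ssum j z := \sum_(i < j) iter i M z.
Lemma SsumK j z : Ssum j z - M (Ssum j z) = z - iter j M z.
Proof.
elim: j => [|j IH]; first by rewrite /Ssum big_ord0 M0 !subrr.
rewrite /Ssum big_ord_recr /= MD -/(Ssum j z).
by rewrite opprD addrACA IH addrA subrK.
Qed.

Lemma nz_im (z : Zk) : exists w, z *+ n = w - M w.
Proof.
exists (\sum_(j < n) Ssum j z).
rewrite Msumr -sumrB; under eq_bigr => j _ do rewrite SsumK.
by rewrite sumrB Msum subr0 sumr_const card_ord.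
Qed.

Local Notation T := {ffun 'I_k -> 'I_n}.
Definition vec (f : T) : Zk := \row_i ((f i : nat)%:Z).

Lemma decomp_x (x : Zk) : exists (f : T) (y : Zk), x = vec f + (y - M y).
Proof.
have n0 : (n%:Z) != 0 by rewrite eqz_nat -lt0n.
have hf : forall i, (`|(x ord0 i %% n)%Z|%N < n)%N.
  move=> i; rewrite -ltz_nat abszE.
  by rewrite ger0_norm ?modz_ge0 //; exact: (ltz_mod _ n0).
exists [ffun i => Ordinal (hf i)].
have [w hw] := nz_im (\row_i ((x ord0 i) %/ n)%Z); exists w; rewrite -hw.
apply/rowP => i; rewrite !mxE mxMnE !mxE ffunE /=.
rewrite abszE ger0_norm ?modz_ge0 // addrC -mulr_natr.
rewrite -[x 0 i]/(x ord0 i) natz; exact: divz_eq.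
Qed.

Lemma telesc (V : zmodType) (F : nat -> V) m :
  \sum_(j < m) F j.+1 = \sum_(j < m) F j + F m - F 0%N.
Proof.
elim: m => [|m IH]; first by rewrite !big_ord0 add0r subrr.
by rewrite !big_ord_recr /= IH addrAC.
Qed.

Lemma reid : reidemeister_finite phi.
Proof.
pose rep (f : T) := @Wr G k (fun _ => 0) (vec f) (finsupp0 G k).
exists #|T|, (fun i => rep (enum_val i)).
move=> [tau x htau].
have [f [y Hx]] := decomp_x x.
exists (enum_rank f); rewrite enum_rankK.
pose w := - y.
pose hg v := Mi (v - x).
pose ff u := M u + x.
have hgff u : hg (ff u) = u by rewrite /hg /ff addrK MK.
have ffhg v : ff (hg v) = v by rewrite /hg /ff MiK subrK.
have iterff j u : iter j ff u = iter j M u + \sum_(i < j) iter i M x.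
  elim: j => [|j IH]; first by rewrite big_ord0 addr0.
  rewrite iterS IH /ff MD Msumr big_ord_recl /= -addrA; congr (_ + _).
  by rewrite addrC.
have iterffn u : iter n ff u = u by rewrite iterff Msum addr0 Mn.
have iterK j v : iter j ff (iter j hg v) = v.
  elim: j => [|j IH] //; by rewrite iterSr iterS ffhg.
have iterhgn v : iter n hg v = v by rewrite -{2}(iterK n v) iterffn.
pose eta v := Bi (- tau v).
pose rho v := \sum_(j < n) iter j A (eta (iter j hg v)).
have rhoK v : rho v - A (rho (hg v)) = - tau v.
  rewrite /rho Asumr.
  have -> : \sum_(j < n) A (iter j A (eta (iter j hg (hg v)))) =
            \sum_(j < n) iter j.+1 A (eta (iter j.+1 hg v)).
    by apply: eq_bigr => j _; rewrite [iter j.+1 hg v]iterSr.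
  have -> : \sum_(j < n) iter j.+1 A (eta (iter j.+1 hg v)) =
     \sum_(j < n) iter j A (eta (iter j hg v)) + iter n A (eta (iter n hg v))
     - eta v.
    exact: (telesc (fun j => iter j A (eta (iter j hg v)))).
  rewrite opprB addrCA opprD addNKr iterhgn.
  by rewrite /eta BiK.
have frho : finsupp rho.
  case: htau => s hs.
  exists (flatten [seq [seq iter j ff u | u <- s] | j <- iota 0 n]) => v hv.
  case: (pickP (fun j : 'I_n => iter j A (eta (iter j hg v)) != 0)) => [j Hj|H].
    apply/flatten_mapP; exists (nat_of_ord j); first by rewrite mem_iota /= add0n ltn_ord.
    apply/mapP; exists (iter j hg v); last by rewrite iterK.
    apply: hs; apply: contra Hj => /eqP Ht.
    by rewrite /eta Ht oppr0 Bi0 iterA0.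
  move: hv; rewrite /rho big1 ?eqxx // => j _.
  by move/negbFE: (H j) => /eqP.
pose sigma := wshift w rho.
exists (@Wr G k sigma w (finsupp_shift w frho)).
apply: wr_ext => /=; last first.
  by rewrite /w opprK Hx addrCA addKr subrK.
apply: functional_extensionality => z /=.
rewrite /sigma /wshift /= [- - w]opprK addrK AN.
have -> : z - (w + x) = (z - w) - x by rewrite opprD addrA.
by rewrite addrAC (rhoK (z - w)) addNr.
Qed.

End WG.

Lemma wr_generic (G : finZmodType) (k n : nat) (M : 'rV[int]_k -> 'rV[int]_k)
  (A : G -> G) :
  (0 < n)%N -> (forall x y, M (x + y) = M x + M y) ->
  (forall x, \sum_(j < n) iter j M x = 0) ->
  (forall g h, A (g + h) = A g + A h) -> injective A ->
  injective (fun g => g - iter n A g) ->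
  exists phi : wr G k -> wr G k, wr_automorphism phi /\ reidemeister_finite phi.
Proof.
move=> n0 MD Ms AD Ai Bi.
eexists; split; first exact: (phi_auto n0 MD Ms AD Ai).
exact: (reid n0 MD Ms AD Bi).
Qed.

Lemma sum2 (V : zmodType) (f : nat -> V) : \sum_(j < 2) f j = f 0%N + f 1%N.
Proof. by rewrite !big_ord_recr big_ord0 /= add0r. Qed.
Lemma sum3 (V : zmodType) (f : nat -> V) : \sum_(j < 3) f j = f 0%N + f 1%N + f 2%N.
Proof. by rewrite !big_ord_recr big_ord0 /= add0r. Qed.
Lemma sum5 (V : zmodType) (f : nat -> V) :
  \sum_(j < 5) f j = f 0%N + f 1%N + f 2%N + f 3%N + f 4%N.
Proof. by rewrite !big_ord_recr big_ord0 /= add0r. Qed.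

Definition Mneg k (x : 'rV[int]_k) := - x.
Lemma Mneg_sum k (x : 'rV[int]_k) : \sum_(j < 2) iter j (@Mneg k) x = 0.
Proof. by rewrite (sum2 (fun j => iter j (@Mneg k) x)) /= /Mneg subrr. Qed.

Section Block.
Variables (k b : nat).
Definition get (x : 'rV[int]_k) (j : nat) : int :=
  if insub j is Some i then x ord0 i else 0.
Definition Mb (x : 'rV[int]_k) : 'rV[int]_k :=
  \row_(i < k) ((if (i %% b == 0)%N then 0 else get x i.-1) - get x (i - i %% b + b.-1)).

Lemma getE x (i : 'I_k) : get x i = x ord0 i.
Proof. by rewrite /get valK. Qed.

Lemma get_inj x y : (forall j, (j < k)%N -> get x j = get y j) -> x = y.
Proof. by move=> H; apply/rowP => i; have := H i (ltn_ord i); rewrite !getE. Qed.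

Lemma getD x y j : get (x + y) j = get x j + get y j.
Proof. by rewrite /get; case: insubP => [i _ _|_]; rewrite ?mxE ?addr0. Qed.
Lemma get0 j : get 0 j = 0.
Proof. by rewrite /get; case: insubP => [i _ _|_]; rewrite ?mxE. Qed.
Lemma get_sum (I : Type) (r : seq I) (F : I -> 'rV[int]_k) j :
  get (\sum_(i <- r) F i) j = \sum_(i <- r) get (F i) j.
Proof. exact: (big_morph (get^~ j) (fun x y => getD x y j) (get0 j)). Qed.

Lemma MbD x y : Mb (x + y) = Mb x + Mb y.
Proof.
apply/rowP => i; rewrite !mxE !getD.
by case: ifP => _; rewrite ?addr0; ring.
Qed.

Lemma getMb x q a : (a < b)%N -> (q * b + a < k)%N ->
  get (Mb x) (q * b + a) =
  (if a == 0%N then 0 else get x (q * b + a).-1) - get x (q * b + b.-1).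
Proof.
move=> ab hk.
rewrite /get insubT /= mxE -/(get x _) -/(get x _).
by rewrite modnMDl modn_small // addnK.
Qed.
End Block.

Section B4.
Variables (k s : nat).
Hypothesis hk : k = (4 * s)%N.
Local Notation M := (@Mb k 4).
Definition C4 (v : int * int * int * int) : int * int * int * int :=
  let: (a0, a1, a2, a3) := v in (- a3, a0 - a3, a1 - a3, a2 - a3).
Definition blk4 (x : 'rV[int]_k) q :=
  (get x (q * 4 + 0), get x (q * 4 + 1), get x (q * 4 + 2), get x (q * 4 + 3)).

Lemma blk4_M x q : (q < s)%N -> blk4 (M x) q = C4 (blk4 x q).
Proof.
move=> qs; rewrite /blk4 /C4 !getMb //; try lia.
have -> : (q * 4 + 1).-1 = (q * 4 + 0)%N by lia.
have -> : (q * 4 + 2).-1 = (q * 4 + 1)%N by lia.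
have -> : (q * 4 + 3).-1 = (q * 4 + 2)%N by lia.
by rewrite /= sub0r.
Qed.

Lemma blk4_iter x q j : (q < s)%N -> blk4 (iter j M x) q = iter j C4 (blk4 x q).
Proof. by move=> qs; elim: j => //= j <-; rewrite blk4_M. Qed.

Lemma Mb4_sum x : \sum_(j < 5) iter j M x = 0.
Proof.
apply: get_inj => j jk; rewrite get_sum get0.
have qs : (j %/ 4 < s)%N by lia.
have ja : j = (j %/ 4 * 4 + j %% 4)%N by rewrite -divn_eq.
rewrite (sum5 (fun i => get (iter i M x) j)) ja.
move: (ltn_pmod j (isT : (0 < 4)%N)); set q := (j %/ 4)%N.
have c0 y : get y (q * 4 + 0) = (blk4 y q).1.1.1 by [].
have c1 y : get y (q * 4 + 1) = (blk4 y q).1.1.2 by [].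
have c2 y : get y (q * 4 + 2) = (blk4 y q).1.2 by [].
have c3 y : get y (q * 4 + 3) = (blk4 y q).2 by [].
case: (j %% 4)%N => [|[|[|[|r]]]] // _;
rewrite ?c0 ?c1 ?c2 ?c3 !blk4_iter //;
case: (blk4 x q) => [[[a0 a1] a2] a3] /=; ring.
Qed.
End B4.

Section B2.
Variables (k s : nat).
Hypothesis hk : k = (2 * s)%N.
Local Notation M := (@Mb k 2).
Definition C2 (v : int * int) : int * int :=
  let: (a0, a1) := v in (- a1, a0 - a1).
Definition blk2 (x : 'rV[int]_k) q := (get x (q * 2 + 0), get x (q * 2 + 1)).

Lemma blk2_M x q : (q < s)%N -> blk2 (M x) q = C2 (blk2 x q).
Proof.
move=> qs; rewrite /blk2 /C2 !getMb //; try lia.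
have -> : (q * 2 + 1).-1 = (q * 2 + 0)%N by lia.
by rewrite /= sub0r.
Qed.

Lemma blk2_iter x q j : (q < s)%N -> blk2 (iter j M x) q = iter j C2 (blk2 x q).
Proof. by move=> qs; elim: j => //= j <-; rewrite blk2_M. Qed.

Lemma Mb2_sum x : \sum_(j < 3) iter j M x = 0.
Proof.
apply: get_inj => j jk; rewrite get_sum get0.
have qs : (j %/ 2 < s)%N by lia.
have ja : j = (j %/ 2 * 2 + j %% 2)%N by rewrite -divn_eq.
rewrite (sum3 (fun i => get (iter i M x) j)) ja.
move: (ltn_pmod j (isT : (0 < 2)%N)); set q := (j %/ 2)%N.
have c0 y : get y (q * 2 + 0) = (blk2 y q).1 by [].
have c1 y : get y (q * 2 + 1) = (blk2 y q).2 by [].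
case: (j %% 2)%N => [|[|r]] // _;
rewrite ?c0 ?c1 !blk2_iter //;
case: (blk2 x q) => [a0 a1] /=; ring.
Qed.
End B2.

Inductive atom := A1 of nat & int | A2 of nat | A3 of nat.
Definition sz (a : atom) : nat := match a with A1 _ _ => 1 | A2 _ => 2 | A3 _ => 3 end.
Definition amod (a : atom) : nat := match a with A1 q _ => q | A2 q => q | A3 q => q end.

Definition bf (a : atom) (c : nat -> int) : nat -> int := fun j =>
  match a with
  | A1 _ u => match j with 0 => u * c 0%N | _ => 0 end
  | A2 _ => match j with 0 => c 1%N | 1 => c 0%N + c 1%N | _ => 0 end
  | A3 _ => match j with 0 => c 1%N | 1 => c 2%N | 2 => c 0%N + c 1%N | _ => 0 end
  end.

Definition join (s : nat) (f g : nat -> int) : nat -> int :=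
  fun j => if (j < s)%N then f j else g (j - s)%N.
Definition shift (s : nat) (c : nat -> int) : nat -> int := fun i => c (i + s)%N.

Fixpoint F (ats : seq atom) (c : nat -> int) : nat -> int :=
  match ats with
  | [::] => fun _ => 0
  | a :: ats' => join (sz a) (bf a c) (F ats' (shift (sz a) c))
  end.

Fixpoint Lam (ats : seq atom) (c : nat -> int) : Prop :=
  match ats with
  | [::] => True
  | a :: ats' => (forall j, (j < sz a)%N -> ((amod a)%:Z %| c j)%Z) /\
                 Lam ats' (shift (sz a) c)
  end.

Definition mods (ats : seq atom) : seq nat :=
  flatten [seq nseq (sz a) (amod a) | a <- ats].

Lemma Lam_nth ats c : Lam ats c <->
  forall j, (j < size (mods ats))%N -> ((nth 0%N (mods ats) j)%:Z %| c j)%Z.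
Proof.
elim: ats c => [|a ats IH] c /=; first by split.
rewrite /mods /= -/(mods ats) size_cat size_nseq; split.
  move=> [H1 /IH H2] j hj; rewrite nth_cat size_nseq.
  case: ifP => hja; first by rewrite nth_nseq hja; apply: H1.
  have := H2 (j - sz a)%N; rewrite /shift subnK; last by rewrite leqNgt hja.
  by apply; lia.
move=> H; split.
  move=> j hj; have := H j; rewrite nth_cat size_nseq hj nth_nseq hj; apply; lia.
apply/IH => j hj; have := H (j + sz a)%N; rewrite nth_cat size_nseq.
have -> : (j + sz a < sz a)%N = false by lia.
by rewrite addnK; apply; lia.
Qed.

Lemma bfB a c1 c2 j : bf a (fun i => c1 i - c2 i) j = bf a c1 j - bf a c2 j.
Proof. by case: a => [q u|q|q] /=; case: j => [|[|[|j]]] /=; ring. Qed.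

Lemma FB ats c1 c2 j : F ats (fun i => c1 i - c2 i) j = F ats c1 j - F ats c2 j.
Proof.
elim: ats c1 c2 j => [|a ats IH] c1 c2 j /=; first by rewrite subr0.
by rewrite /join; case: ifP => _; rewrite ?bfB // -IH.
Qed.

Lemma shift_join s f g : shift s (join s f g) = g.
Proof.
apply: functional_extensionality => i; rewrite /shift /join.
have -> : (i + s < s)%N = false by lia.
by rewrite addnK.
Qed.

Lemma bf_join a f g : bf a (join (sz a) f g) = bf a f.
Proof.
apply: functional_extensionality => j.
by case: a => [q u|q|q] /=; case: j => [|[|[|j]]].
Qed.

Lemma join_shift s c : join s c (shift s c) = c.
Proof.
apply: functional_extensionality => j; rewrite /join /shift.
by case: ifP => // h; rewrite subnK //; lia.
Qed.

Lemma iterF a ats n c :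
  iter n (F (a :: ats)) c = join (sz a) (iter n (bf a) c) (iter n (F ats) (shift (sz a) c)).
Proof.
elim: n => [|n IH] /=; first by rewrite join_shift.
by rewrite IH bf_join shift_join.
Qed.

Lemma bf_Lam a c : (forall j, (j < sz a)%N -> ((amod a)%:Z %| c j)%Z) ->
  forall j, (j < sz a)%N -> ((amod a)%:Z %| bf a c j)%Z.
Proof.
case: a => [q u|q|q] /= H j hj.
- by case: j hj => [|j] // _; apply: dvdz_mull; apply: H.
- by case: j hj => [|[|j]] // _; try apply: rpredD; apply: H.
- by case: j hj => [|[|[|j]]] // _; try apply: rpredD; apply: H.
Qed.

Lemma Lam_F ats c : Lam ats c -> Lam ats (F ats c).
Proof.
elim: ats c => [|a ats IH] c //= [H1 H2]; split.
  by move=> j hj; rewrite /join hj; apply: bf_Lam.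
by rewrite shift_join; apply: IH.
Qed.

Definition P3 (a : atom) := forall c,
  (forall j, (j < sz a)%N -> ((amod a)%:Z %| bf a c j)%Z) ->
  forall j, (j < sz a)%N -> ((amod a)%:Z %| c j)%Z.
Definition P4 (n : nat) (a : atom) := forall c,
  (forall j, (j < sz a)%N -> ((amod a)%:Z %| c j - iter n (bf a) c j)%Z) ->
  forall j, (j < sz a)%N -> ((amod a)%:Z %| c j)%Z.

Lemma Lam_Finv ats c : (forall a, List.In a ats -> P3 a) -> Lam ats (F ats c) -> Lam ats c.
Proof.
elim: ats c => [|a ats IH] c //= HV [H1 H2]; split.
  apply: (HV a (List.in_eq _ _)) => j hj; have := H1 j hj; by rewrite /join hj.
apply: IH; first by move=> b hb; apply: HV; right.
by rewrite shift_join in H2.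
Qed.

Lemma Lam_Fn n ats c : (forall a, List.In a ats -> P4 n a) ->
  Lam ats (fun j => c j - iter n (F ats) c j) -> Lam ats c.
Proof.
elim: ats c => [|a ats IH] c //= HV [H1 H2]; split.
  apply: (HV a (List.in_eq _ _)) => j hj; have := H1 j hj; by rewrite iterF /join hj.
apply: IH; first by move=> b hb; apply: HV; right.
move: H2; rewrite iterF.
have -> : shift (sz a) (fun j => c j - join (sz a) (iter n (bf a) c)
              (iter n (F ats) (shift (sz a) c)) j)
   = fun j => shift (sz a) c j - iter n (F ats) (shift (sz a) c) j.
  by rewrite /shift /join; apply: functional_extensionality => j; rewrite /= (_ : (j + sz a < sz a)%N = false) ?addnK //; lia.
by [].
Qed.


Section Aconstr.
Variables (G : finZmodType) (ats : seq atom) (ms : seq nat) (n : nat).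
Hypothesis Hms : ms = mods ats.
Variable e : 'I_(size ms) -> G.
Hypothesis Hrel : forall c : 'I_(size ms) -> int,
  \sum_(t < size ms) e t *~ c t = 0 <->
  forall t : 'I_(size ms), ((nth 0%N ms t)%:Z %| c t)%Z.
Hypothesis Hsurj : forall g : G, exists c : 'I_(size ms) -> int,
  g = \sum_(t < size ms) e t *~ c t.
Hypothesis HP3 : forall a, List.In a ats -> P3 a.
Hypothesis HP4 : forall a, List.In a ats -> P4 n a.

Definition S (c : nat -> int) : G := \sum_(t < size ms) e t *~ c t.

Lemma S_eq c c' : S c = S c' <-> Lam ats (fun j => c j - c' j).
Proof.
rewrite Lam_nth -Hms.
have -> : (S c = S c') <-> (S c - S c' = 0).
  by split => [->|/eqP]; rewrite ?subrr // subr_eq0 => /eqP.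
rewrite /S -sumrB.
have -> : \sum_(t < size ms) (e t *~ c t - e t *~ c' t) =
          \sum_(t < size ms) e t *~ (fun t : 'I_(size ms) => c t - c' t) t.
  by apply: eq_bigr => t _; rewrite mulrzBr.
rewrite Hrel; split => H.
  by move=> j hj; exact: (H (Ordinal hj)).
by move=> t; apply: H.
Qed.

Lemma S_surj g : exists c : nat -> int, g = S c.
Proof. by have [c ->] := Hsurj g; exists (fun j => if insub j is Some t then c t else 0); rewrite /S; apply: eq_bigr => t _; rewrite valK. Qed.

Definition cg (g : G) : nat -> int := proj1_sig (constructive_indefinite_description _ (S_surj g)).
Lemma cgK g : S (cg g) = g.
Proof. by rewrite /cg; case: constructive_indefinite_description. Qed.

Definition Amap (g : G) : G := S (F ats (cg g)).

Lemma Lam_ext c c' : (forall j, c j = c' j) -> Lam ats c -> Lam ats c'.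
Proof. by move=> H; have -> : c = c' by apply: functional_extensionality. Qed.

Lemma AmapS c : Amap (S c) = S (F ats c).
Proof.
rewrite /Amap; apply/S_eq.
have : Lam ats (fun j => cg (S c) j - c j) by apply/S_eq; rewrite cgK.
move/Lam_F; apply: Lam_ext => j; exact: FB ats _ _ j.
Qed.

Lemma SD c c' : S c + S c' = S (fun j => c j + c' j).
Proof. by rewrite /S -big_split; apply: eq_bigr => t _; rewrite mulrzDr. Qed.
Lemma SB c c' : S c - S c' = S (fun j => c j - c' j).
Proof. by rewrite /S -sumrB; apply: eq_bigr => t _; rewrite mulrzBr. Qed.

Lemma F0 j : F ats (fun _ => 0) j = 0.
Proof.
have := FB ats (fun _ => 0) (fun _ => 0) j.
have -> : (fun _ : nat => (0 : int) - 0) = (fun _ => 0).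
  by apply: functional_extensionality => i; rewrite subrr.
by rewrite subrr.
Qed.
Lemma FN c j : F ats (fun i => - c i) j = - F ats c j.
Proof.
have := FB ats (fun _ => 0) c j.
have -> : (fun i : nat => 0 - c i) = (fun i => - c i).
  by apply: functional_extensionality => i; rewrite sub0r.
by rewrite F0 sub0r.
Qed.
Lemma FD c c' j : F ats (fun i => c i + c' i) j = F ats c j + F ats c' j.
Proof.
have := FB ats c (fun i => - c' i) j.
have -> : (fun i => c i - - c' i) = (fun i => c i + c' i).
  by apply: functional_extensionality => i; rewrite opprK.
by rewrite FN opprK.
Qed.

Lemma AmapD g h : Amap (g + h) = Amap g + Amap h.
Proof.
rewrite -(cgK g) -(cgK h) !AmapS SD AmapS SD.
congr S; apply: functional_extensionality => j; exact: FD.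
Qed.

Lemma S0 c : S c = 0 <-> Lam ats c.
Proof.
have -> : (0 : G) = S (fun _ => 0) by rewrite /S big1 // => t _; rewrite mulr0z.
rewrite S_eq; split; apply: Lam_ext => j; by rewrite subr0.
Qed.

Lemma Amap_inj : injective Amap.
Proof.
move=> g h; rewrite -(cgK g) -(cgK h) !AmapS => /S_eq H; apply/S_eq.
apply: Lam_Finv => //; move: H; apply: Lam_ext => j; by rewrite (FB ats).
Qed.

Lemma iterAmap j c : iter j Amap (S c) = S (iter j (F ats) c).
Proof. by elim: j => //= j ->; rewrite AmapS. Qed.

Lemma Amap0 : Amap 0 = 0.
Proof. by apply: (addrI (Amap 0)); rewrite -AmapD !addr0. Qed.
Lemma AmapB g h : Amap (g - h) = Amap g - Amap h.
Proof.
have AN : Amap (- h) = - Amap h.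
  by apply/eqP; rewrite -addr_eq0 -AmapD addNr Amap0.
by rewrite AmapD AN.
Qed.
Lemma iterAmapB j g h : iter j Amap (g - h) = iter j Amap g - iter j Amap h.
Proof. by elim: j => //= j ->; rewrite AmapB. Qed.

Lemma Bmap_inj : injective (fun g => g - iter n Amap g).
Proof.
move=> g h /= E.
apply/eqP; rewrite -subr_eq0; apply/eqP.
have : (g - h) - iter n Amap (g - h) = 0.
  rewrite iterAmapB; apply/eqP; rewrite subr_eq0.
  move: (iter n Amap g) (iter n Amap h) E => X Y.
  move/eqP; rewrite subr_eq => /eqP ->.
  by rewrite addrAC [_ - Y - h]addrAC subrr add0r addrC.
rewrite -(cgK (g - h)) iterAmap SB => /S0 H; apply/S0.
by apply: (Lam_Fn HP4).
Qed.
End Aconstr.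

Lemma dvd_comb (q x y a b : int) : (q %| x)%Z -> (q %| y)%Z -> (q %| a * x + b * y)%Z.
Proof. by move=> hx hy; apply: rpredD; apply: dvdz_mull. Qed.
Lemma dvd_comb3 (q x y z a b c : int) : (q %| x)%Z -> (q %| y)%Z -> (q %| z)%Z ->
  (q %| a * x + b * y + c * z)%Z.
Proof. by move=> hx hy hz; apply: rpredD; [apply: dvd_comb|apply: dvdz_mull]. Qed.

Lemma P3_A2 q : P3 (A2 q).
Proof.
move=> c H; have H0 := H 0%N isT; have H1 := H 1%N isT.
case=> [|[|j]] // _.
  have -> : c 0%N = (-1) * bf (A2 q) c 0%N + 1 * bf (A2 q) c 1%N by rewrite /=; ring.
  by apply: dvd_comb.
Qed.

Lemma P3_A3 q : P3 (A3 q).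
Proof.
move=> c H; have H0 := H 0%N isT; have H1 := H 1%N isT; have H2 := H 2%N isT.
case=> [|[|[|j]]] // _.
- have -> : c 0%N = (-1) * bf (A3 q) c 0%N + 1 * bf (A3 q) c 2%N by rewrite /=; ring.
  by apply: dvd_comb.
Qed.

Lemma P3_A1 q u : coprimez q%:Z u -> P3 (A1 q u).
Proof.
move=> cq c H; have H0 := H 0%N isT; simpl in H0.
case=> [|j] // _; by rewrite -(Gauss_dvdzl _ cq) mulrC.
Qed.

Lemma iterA1 q u n c : iter n (bf (A1 q u)) c 0%N = u ^+ n * c 0%N.
Proof. by elim: n => [|n IH] /=; rewrite ?mul1r // IH exprS mulrA. Qed.

Lemma P4_A1 n q u : coprimez q%:Z (1 - u ^+ n) -> P4 n (A1 q u).
Proof.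
move=> cq c H; have H0 := H 0%N isT; rewrite iterA1 in H0.
case=> [|j] // _.
by rewrite -(Gauss_dvdzl _ cq) (_ : c 0%N * (1 - u ^+ n) = c 0%N - u ^+ n * c 0%N) //; ring.
Qed.

Ltac solve4 lhs rhs lem :=
  let H := fresh in
  (have H : lhs = rhs by rewrite /=; ring); rewrite H; by apply: lem.

Section P4s.
Variable q : nat.
Local Notation e n a c j := (c j - iter n (bf a) c j).

Lemma P4_A2_2 : P4 2 (A2 q).
Proof.
move=> c H; have H0 := H 0%N isT; have H1 := H 1%N isT.
case=> [|[|j]] // _.
  solve4 (c 0%N) (1 * e 2 (A2 q) c 0%N + (-1) * e 2 (A2 q) c 1%N) dvd_comb.
solve4 (c 1%N) ((-1) * e 2 (A2 q) c 0%N + 0 * e 2 (A2 q) c 1%N) dvd_comb.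
Qed.

Lemma P4_A3_2 : P4 2 (A3 q).
Proof.
move=> c H; have H0 := H 0%N isT; have H1 := H 1%N isT; have H2 := H 2%N isT.
case=> [|[|[|j]]] // _.
- solve4 (c 0%N) (0 * e 2 (A3 q) c 0%N + (-1) * e 2 (A3 q) c 1%N + 0 * e 2 (A3 q) c 2%N) dvd_comb3.
- solve4 (c 1%N) (0 * e 2 (A3 q) c 0%N + 0 * e 2 (A3 q) c 1%N + (-1) * e 2 (A3 q) c 2%N) dvd_comb3.
- solve4 (c 2%N) ((-1) * e 2 (A3 q) c 0%N + (-1) * e 2 (A3 q) c 1%N + 0 * e 2 (A3 q) c 2%N) dvd_comb3.
Qed.

Lemma P4_A3_5 : P4 5 (A3 q).
Proof.
move=> c H; have H0 := H 0%N isT; have H1 := H 1%N isT; have H2 := H 2%N isT.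
case=> [|[|[|j]]] // _.
- solve4 (c 0%N) (1 * e 5 (A3 q) c 0%N + (-1) * e 5 (A3 q) c 1%N + 0 * e 5 (A3 q) c 2%N) dvd_comb3.
- solve4 (c 1%N) (0 * e 5 (A3 q) c 0%N + 1 * e 5 (A3 q) c 1%N + (-1) * e 5 (A3 q) c 2%N) dvd_comb3.
- solve4 (c 2%N) ((-1) * e 5 (A3 q) c 0%N + (-1) * e 5 (A3 q) c 1%N + 1 * e 5 (A3 q) c 2%N) dvd_comb3.
Qed.

Lemma P4_A2_5 : coprimez q%:Z 11 -> P4 5 (A2 q).
Proof.
move=> cq c H; have H0 := H 0%N isT; have H1 := H 1%N isT.
case=> [|[|j]] // _; rewrite -(Gauss_dvdzl _ cq).
  solve4 (c 0%N * 11) (7 * e 5 (A2 q) c 0%N + (-5) * e 5 (A2 q) c 1%N) dvd_comb.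
solve4 (c 1%N * 11) ((-5) * e 5 (A2 q) c 0%N + 2 * e 5 (A2 q) c 1%N) dvd_comb.
Qed.
End P4s.

Lemma cop_prime (p r D : nat) : prime p -> prime D -> p != D ->
  coprimez (p ^ r)%N%:Z D%:Z.
Proof.
move=> pp pD ne; rewrite coprimezE /=.
case: r => [|r]; first by rewrite expn0 coprime1n.
by rewrite coprime_pexpl // prime_coprime // dvdn_prime2.
Qed.

Definition blocks (q d : nat) : seq atom :=
  if odd d then A3 q :: nseq (d./2 - 1) (A2 q) else nseq d./2 (A2 q).

Definition mkats (bl : nat -> bool) (u : int) (L : seq (nat * nat * nat)) : seq atom :=
  flatten [seq (if bl t.1.1 then blocks (t.1.1 ^ t.1.2) t.2
                else nseq t.2 (A1 (t.1.1 ^ t.1.2) u)) | t <- L].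

Lemma mods_cat a b : mods (a ++ b) = mods a ++ mods b.
Proof. by rewrite /mods map_cat flatten_cat. Qed.

Lemma mods_A1 q u d : mods (nseq d (A1 q u)) = nseq d q.
Proof. by elim: d => //= d IH; rewrite /mods /= -/(mods _) IH. Qed.
Lemma mods_A2 q m : mods (nseq m (A2 q)) = nseq (m.*2) q.
Proof. by elim: m => //= m IH; rewrite /mods /= -/(mods _) IH. Qed.

Lemma mods_blocks q d : (2 <= d)%N -> mods (blocks q d) = nseq d q.
Proof.
move=> hd; rewrite /blocks; have := odd_double_half d.
case: (odd d) => /= E.
  rewrite /mods /= -/(mods _) mods_A2.
  move: E; case: (d./2) => [|h] E; first by move: hd; rewrite -E.
  by rewrite -E subn1 /=.
by rewrite mods_A2 -[in RHS]E.
Qed.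

Lemma mods_mkats (bl : nat -> bool) (u : int) (L : seq (nat * nat * nat)) : (forall t, t \in L -> bl t.1.1 -> (2 <= t.2)%N) ->
  mods (mkats bl u L) = decomp_moduli L.
Proof.
elim: L => [|t L IH] //= H.
rewrite mods_cat IH; last by move=> t' ht'; apply: H; rewrite in_cons ht' orbT.
congr (_ ++ _); case: ifP => hb; last by rewrite mods_A1.
by rewrite mods_blocks // H // mem_head.
Qed.

Lemma In_nseq (a x : atom) d : List.In a (nseq d x) -> a = x.
Proof. by elim: d => //= d IH [->|/IH]. Qed.

Lemma In_blocks a q d : List.In a (blocks q d) -> a = A2 q \/ a = A3 q.
Proof.
rewrite /blocks; case: (odd d) => /=; last by move/In_nseq; left.
by case=> [<-|/In_nseq]; [right|left].
Qed.

Lemma In_mkats (Pr : atom -> Prop) (bl : nat -> bool) (u : int) (L : seq (nat * nat * nat)) :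
  (forall t, t \in L -> bl t.1.1 -> Pr (A2 (t.1.1 ^ t.1.2)) /\ Pr (A3 (t.1.1 ^ t.1.2))) ->
  (forall t, t \in L -> ~~ bl t.1.1 -> Pr (A1 (t.1.1 ^ t.1.2) u)) ->
  forall a, List.In a (mkats bl u L) -> Pr a.
Proof.
elim: L => [|t L IH] //= H1 H2 a.
rewrite List.in_app_iff => -[|]; last first.
  apply: IH => t' ht'; [apply: H1|apply: H2]; by rewrite in_cons ht' orbT.
case: ifP => hb.
  case/In_blocks => ->; have := H1 t (mem_head _ _) hb; tauto.
by move/In_nseq => ->; apply: H2; rewrite ?mem_head ?hb.
Qed.

Lemma gen_main (G : finZmodType) (L : seq (nat * nat * nat)) (k n : nat)
  (M : 'rV[int]_k -> 'rV[int]_k) (bl : nat -> bool) (u : int) :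
  decomp_iso G L -> (0 < n)%N ->
  (forall x y, M (x + y) = M x + M y) ->
  (forall x, \sum_(j < n) iter j M x = 0) ->
  (forall t, t \in L -> bl t.1.1 -> (2 <= t.2)%N) ->
  (forall a, List.In a (mkats bl u L) -> P3 a /\ P4 n a) ->
  exists phi : wr G k -> wr G k, wr_automorphism phi /\ reidemeister_finite phi.
Proof.
move=> hG n0 MD Ms Hbl HP.
move: hG; rewrite /decomp_iso /= => -[e [Hrel Hsurj]].
have Hms : decomp_moduli L = mods (mkats bl u L) by rewrite mods_mkats.
apply: (@wr_generic G k n M (Amap (mkats bl u L) Hsurj)) => //.
- exact: (AmapD Hms Hrel).
- by apply: (Amap_inj Hms Hrel) => a /HP [].
- by apply: (Bmap_inj Hms Hrel) => a /HP [].
Qed.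


Unset Implicit Arguments.

Theorem mainTheorem1 (k : nat) (hk : (1 <= k)%N)
  (G : finZmodType) (L : seq (nat * nat * nat))
  (hL_uniq : uniq [seq t.1 | t <- L])
  (hL_valid : forall t, t \in L ->
      [/\ prime t.1.1, (1 <= t.1.2)%N & (1 <= t.2)%N])
  (hG : decomp_iso G L)
  (hcond :
     (forall t, t \in L -> (t.1.1 == 2)%N || (t.1.1 == 3)%N -> (2 <= t.2)%N)
  \/ ((forall t, t \in L -> t.1.1 != 2%N) /\ ~~ odd k)
  \/ ((forall t, t \in L -> t.1.1 = 2%N -> (2 <= t.2)%N) /\
      exists s : nat, (0 < s)%N /\ k = (4 * s)%N)) :
  exists phi : wr G k -> wr G k,
    wr_automorphism phi /\ reidemeister_finite phi.
Proof.
have cop2 t : t \in L -> t.1.1 != 2%N -> coprimez (t.1.1 ^ t.1.2)%N%:Z 2%:Z.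
  by move=> /hL_valid [pp _ _] ne; apply: cop_prime.
case: hcond => [H1|[[H2 ev]|[H3 [s [s0 ks]]]]].
-
  apply: (@gen_main G L k 2 (@Mneg k) (fun p => (p == 2)%N || (p == 3)%N) 2 hG) => //.
  + by move=> x y; rewrite /Mneg opprD.
  + exact: Mneg_sum.
  + apply: In_mkats => t ht hb; first by split; split; [exact: P3_A2|exact: P4_A2_2|exact: P3_A3|exact: P4_A3_2].
    have [pp _ _] := hL_valid t ht; move: hb; rewrite negb_or => /andP [n2 n3].
    split; first by apply: P3_A1; apply: cop2.
    apply: P4_A1; rewrite (_ : 1 - 2 ^+ 2 = - 3%:Z) // coprimezN.
    exact: cop_prime.
-
  have ks : k = (2 * k./2)%N by rewrite -{1}(odd_double_half k) (negbTE ev) add0n mul2n.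
  apply: (@gen_main G L k 3 (@Mb k 2) (fun _ => false) (-1) hG) => //.
  + exact: MbD.
  + exact: (Mb2_sum ks).
  + apply: In_mkats => t ht // _.
    split; first by apply: P3_A1; rewrite coprimezN /coprimez gcdz1.
    apply: P4_A1; rewrite (_ : 1 - (-1) ^+ 3 = 2%:Z) //.
    by apply: cop2 => //; apply: H2.
-
  apply: (@gen_main G L k 5 (@Mb k 4) (fun p => (p == 2)%N) (-1) hG) => //.
  + exact: MbD.
  + exact: (Mb4_sum ks).
  + by move=> t ht /eqP; apply: H3.
  + apply: In_mkats => t ht hb.
      move/eqP: hb => hb; split; split; [exact: P3_A2| |exact: P3_A3|exact: P4_A3_5].
      apply: P4_A2_5; rewrite hb.
      by apply: cop_prime => //; rewrite hb.
    split; first by apply: P3_A1; rewrite coprimezN /coprimez gcdz1.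
    apply: P4_A1; rewrite (_ : 1 - (-1) ^+ 5 = 2%:Z) //.
    by apply: cop2.
Qed.
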